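(* The topological entropy of any self-induced minimal Cantor system is either $0$ or $+\infty$.
   Context: A minimal Cantor system $(X,T)$ ($X$ a Cantor set, $T$ a homeomorphism with all orbits dense) is self-induced if there is a nonempty clopen proper subset $U\subsetneq X$ such that the induced system $(U,T_U)$, $T_U(x)=T^{r_U(x)}x$ with $r_U(x)=\inf\{n>0:T^nx\in U\}$, is topologically conjugate to $(X,T)$. *)

(* Defs.v *)
From HB Require Import structures.
From mathcomp Require Import all_boot all_order all_algebra.
From mathcomp Require Import all_classical all_reals all_analysis.
Set Implicit Arguments. Unset Strict Implicit. Unset Printing Implicit Defensive.
Import Order.TTheory GRing.Theory Num.Theory.
Local Open Scope classical_set_scope.
Local Open Scope ring_scope.

(** A Cantor set: a nonempty, metrizable (pseudometric + Hausdorff), compact,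
    perfect, zero-dimensional space. *)
Definition cantor_set {R : realType} (X : pseudoMetricType R) : Prop :=
  cantor_like X /\ [set: X] !=set0.

Definition is_homeo {X : topologicalType} (T : X -> X) : Prop :=
  continuous T /\ exists Ti : X -> X,
    [/\ continuous Ti, cancel T Ti & cancel Ti T].

Definition orbit_of {X : Type} (T Ti : X -> X) (x : X) : set X :=
  [set y | exists n : nat, y = iter n T x \/ y = iter n Ti x].

Definition minimal_system {X : topologicalType} (T : X -> X) : Prop :=
  continuous T /\ exists Ti : X -> X,
    [/\ continuous Ti, cancel T Ti, cancel Ti T &
        forall x, closure (orbit_of T Ti x) = [set: X]].

Definition first_return {X : Type} (T : X -> X) (U : set X) (x : X) (n : nat) : Prop :=
  (0 < n)%N /\ U (iter n T x) /\ forall m, (0 < m < n)%N -> ~ U (iter m T x).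

(** The induced system (U, T_U) is topologically conjugate to (X, T):
    there is a homeomorphism phi from the subspace U onto X (with inverse psi)
    such that phi (T_U x) = T (phi x) for x in U, where T_U x = T^{r_U(x)} x. *)
Definition induced_conjugate {X : topologicalType} (T : X -> X) (U : set X) : Prop :=
  exists phi psi : X -> X,
    {within U, continuous phi} /\
    continuous psi /\
    (forall y, U (psi y)) /\
    (forall x, U x -> psi (phi x) = x) /\
    (forall y, phi (psi y) = y) /\
    (forall x, U x -> exists n, first_return T U x n /\
                                phi (iter n T x) = T (phi x)).

Definition self_induced {X : topologicalType} (T : X -> X) : Prop :=
  exists U : set X, [/\ clopen U, U !=set0, U != [set: X] & induced_conjugate T U].

(** Topological entropy (Adler–Konheim–McAndrew), with finite open covers
    represented as sequences of open sets. *)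
Definition open_cover {X : topologicalType} (s : seq (set X)) : Prop :=
  (forall A, A \in s -> open A) /\ \bigcup_(A in [set A | A \in s]) A = [set: X].

Definition cover_join {X : Type} (s t : seq (set X)) : seq (set X) :=
  [seq A `&` B | A <- s, B <- t].

Fixpoint cover_iter_join {X : Type} (T : X -> X) (s : seq (set X)) (n : nat) : seq (set X) :=
  match n with
  | 0 => s
  | n'.+1 => cover_join s [seq T @^-1` A | A <- cover_iter_join T s n']
  end.

Definition cover_number {R : realType} {X : Type} (s : seq (set X)) : R :=
  inf [set (size t)%:R | t in [set t : seq (set X) |
         {subset t <= s} /\ \bigcup_(A in [set A | A \in t]) A = [set: X]]].

Definition cover_entropy {R : realType} {X : Type} (T : X -> X) (s : seq (set X)) : \bar R :=
  limn_esup (fun n : nat =>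
    ((ln (@cover_number R X (cover_iter_join T s n))) / (n.+1)%:R)%:E).

Definition top_entropy {R : realType} {X : topologicalType} (T : X -> X) : \bar R :=
  ereal_sup [set cover_entropy T s | s in [set s : seq (set X) | open_cover s]].

(* Main.v *)
Require Import Defs.
From HB Require Import structures.
From mathcomp Require Import all_boot all_order all_algebra.
From mathcomp Require Import all_classical all_reals all_analysis.
From mathcomp Require Import ring lra zify.
Set Implicit Arguments. Unset Strict Implicit. Unset Printing Implicit Defensive.
Import Order.TTheory GRing.Theory Num.Theory.
Local Open Scope classical_set_scope.
Local Open Scope ring_scope.

Lemma joinP {X : Type} (T : X -> X) (s : seq (set X)) m B :
  B \in cover_iter_join T s m <->
  exists f : nat -> set X, (forall j, (j <= m)%N -> f j \in s) /\
    B = [set x | forall j, (j <= m)%N -> f j (iter j T x)].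
Proof.
elim: m B => [|m IH] B /=.
  split=> [Bs|[f [fs ->]]].
    exists (fun _ => B); split=> // ; apply/seteqP; split=> x /=.
      by move=> Bx j; rewrite leqn0 => /eqP ->.
    by move/(_ 0%N (leqnn 0)).
  have -> : [set x | forall j, (j <= 0)%N -> f j (iter j T x)] = f 0%N.
    apply/seteqP; split=> x /=; first by move/(_ 0%N (leqnn 0)).
    by move=> fx j; rewrite leqn0 => /eqP ->.
  exact: fs.
split.
  move=> /allpairsP [[A C] /= [As /mapP [D Dj ->] ->]].
  have [f [fs ->]] := (IH D).1 Dj.
  exists (fun j => if j is j'.+1 then f j' else A); split.
    by case=> // j; rewrite ltnS; apply: fs.
  apply/seteqP; split=> x /=.
    move=> [Ax Fx] [|j] //; rewrite ltnS => jm; rewrite iterSr; exact: Fx.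
  move=> H; split; first exact: (H 0%N).
  by move=> j jm; rewrite -iterSr; apply: (H j.+1).
move=> [f [fs ->]].
have Cj : [set x | forall j, (j <= m)%N -> f j.+1 (iter j T x)] \in cover_iter_join T s m.
  by apply/IH; exists (fun j => f j.+1); split=> // j jm; apply: fs.
have -> : [set x | forall j, (j <= m.+1)%N -> f j (iter j T x)] =
   f 0%N `&` T @^-1` [set x | forall j, (j <= m)%N -> f j.+1 (iter j T x)].
  apply/seteqP; split=> x /=.
    move=> H; split; first exact: (H 0%N).
    by move=> j jm; rewrite -iterSr; apply: (H j.+1).
  move=> [Ax Fx] [|j] //; rewrite ltnS => jm; rewrite iterSr; exact: Fx.
apply/allpairsP; exists (f 0%N, T @^-1` [set x | forall j, (j <= m)%N -> f j.+1 (iter j T x)]).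
split=> //=; first exact: fs.
by apply/mapP; exists [set x | forall j, (j <= m)%N -> f j.+1 (iter j T x)].
Qed.

Definition covers {X : Type} (t : seq (set X)) :=
  \bigcup_(A in [set A | A \in t]) A = [set: X].

Lemma coversP {X : Type} (t : seq (set X)) :
  covers t <-> forall x, exists2 A, A \in t & A x.
Proof.
split.
  move=> H x; have : [set: X] x by [].
  by rewrite -H => -[A /= At Ax]; exists A.
move=> H; apply/seteqP; split=> x // _; have [A At Ax] := H x; by exists A.
Qed.

Lemma cover_number_le {R : realType} {X : Type} (s t : seq (set X)) :
  covers t -> (forall A, A \in t -> exists2 B, B \in s & A `<=` B) ->
  @cover_number R X s <= (size t)%:R.
Proof.
move=> ct H.
have [g Hg] : {g : set X -> set X & forall A, A \in t -> g A \in s /\ A `<=` g A}.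
  apply: (@choice _ _ (fun A B => A \in t -> B \in s /\ A `<=` B)) => A; have [At|At] := boolP (A \in t).
    by have [B Bs AB] := H A At; exists B.
  by exists A.
have -> : size t = size (map g t) by rewrite size_map.
apply: ge_inf.
  by exists 0 => _ [u _ <-]; rewrite ler0n.
exists (map g t) => //; split.
  by move=> B /mapP [A At ->]; have [] := Hg A At.
apply/coversP => x; have [A At Ax] := (coversP t).1 ct x.
exists (g A); first exact: map_f.
by have [_ ] := Hg A At; apply.
Qed.

Lemma cover_number_ge {R : realType} {X : Type} (s : seq (set X)) (x : R) :
  covers s -> (forall t, {subset t <= s} -> covers t -> x <= (size t)%:R) ->
  x <= @cover_number R X s.
Proof.
move=> cs H; apply: lb_le_inf.
  by exists (size s)%:R; exists s => //; split.
by move=> _ [t [ts ct] <-]; apply: H.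
Qed.

Lemma cover_number_ge1 {R : realType} {X : Type} (s : seq (set X)) (x0 : X) :
  covers s -> 1 <= @cover_number R X s.
Proof.
move=> cs; apply: cover_number_ge => // t _ ct.
case: t ct => [|A t] ct; last by rewrite /= ler1n.
by have [A] := (coversP _).1 ct x0.
Qed.

Lemma iter_cont {X : topologicalType} (T : X -> X) n :
  continuous T -> continuous (iter n T).
Proof.
move=> cT; elim: n => [|n IH] x /=; first exact: cvg_id.
exact: (continuous_comp (IH x) (cT _)).
Qed.

Lemma open_pre {X : topologicalType} (f : X -> X) (O : set X) :
  continuous f -> open O -> open (f @^-1` O).
Proof. by move=> cf; apply: open_comp => x _; apply: cf. Qed.

Lemma iter_cancel {X : Type} (T Ti : X -> X) : cancel T Ti ->
  forall n m x, (n <= m)%N -> iter n Ti (iter m T x) = iter (m - n) T x.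
Proof.
move=> TK; elim=> [|n IH] m x nm /=; first by rewrite subn0.
rewrite IH ?(ltnW nm) //; case: m nm => // m; rewrite ltnS => nm.
by rewrite subSS subSn // iterS TK.
Qed.

Lemma seq_max (s : seq nat) i : i \in s -> (i <= foldr maxn 0 s)%N.
Proof.
elim: s => //= a s IH; rewrite in_cons => /orP [/eqP ->|/IH h].
  exact: leq_maxl.
exact: leq_trans h (leq_maxr _ _).
Qed.

Section Dyn.
Variables (R : realType) (X : pseudoMetricType R) (T Ti : X -> X).
Hypotheses (cT : continuous T) (cTi : continuous Ti) (TK : cancel T Ti)
  (TiK : cancel Ti T)
  (dense : forall x, closure (orbit_of T Ti x) = [set: X])
  (compX : compact [set: X]).

Lemma hit (O : set X) y : open O -> O !=set0 ->
  exists n, O (iter n T y) \/ O (iter n Ti y).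
Proof.
move=> oO [w Ow].
have : closure (orbit_of T Ti y) w by rewrite dense.
move=> /(_ O (open_nbhs_nbhs (conj oO Ow))) [z [[n [->|->]] Oz]]; [by exists n; left | by exists n; right].
Qed.

Lemma window (O : set X) : open O -> O !=set0 ->
  exists P, (0 < P)%N /\ forall y, exists j, (j < P)%N /\ O (iter j T y).
Proof.
move=> oO O0.
pose f (n : nat) := \bigcup_(j in [set j | (j <= n)%N])
   (iter j T @^-1` O `|` iter j Ti @^-1` O).
have fo : forall n, open (f n).
  move=> n; apply: bigcup_open => j _; apply: openU;
  by apply: open_pre => //; apply: iter_cont.
have fmono : forall n m y, (n <= m)%N -> f n y -> f m y.
  by move=> n m y nm [j /= jn Hj]; exists j => //=; apply: leq_trans jn nm.
have := (compact_near_coveringP [set: X]).1 compX nat \oo (fun n y => f n y) _.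
case=> [x _ | N _ HN].
  have [n h] := hit x oO O0.
  exists (f n, [set i | (n <= i)%N]); first split => /=.
  - apply: open_nbhs_nbhs; split; first exact: fo.
    by exists n => //=.
  - by exists n.
  by move=> [x' i] /= [fx' ni]; apply: fmono fx'.
pose M := N.
have HM : forall y, f M y by move=> y; apply: (HN M) => //=.
exists (M.*2.+1); split => // y.
have [j /= jN Hj] := HM (iter M T y).
case: Hj => /= Hj.
  exists (j + M)%N; split; first by rewrite ltnS -addnn leq_add2r.
  by rewrite iterD.
exists (M - j)%N; split; first by rewrite ltnS -addnn (leq_trans (leq_subr _ _)) ?leq_addr.
by rewrite -(iter_cancel TK).
Qed.

End Dyn.

Local Open Scope nat_scope.
Lemma sum_ge_len (k : nat -> nat) m n :
  (forall i, m <= i < n -> 0 < k i) -> n - m <= \sum_(m <= i < n) k i.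
Proof.
elim: n => [|n IH] H; first by rewrite sub0n.
case: (leqP m n) => mn.
  rewrite big_nat_recr //=.
  have h1 := IH (fun i hi => H i (ltac:(lia))).
  have h2 : 0 < k n by apply: H; lia.
  lia.
by rewrite (_ : n.+1 - m = 0) //; lia.
Qed.

Lemma sum_block (k : nat -> nat) a b i0 :
  (forall i, a <= i < b -> 0 < k i) -> a <= i0 < b -> 1 < k i0 ->
  (b - a).+1 <= \sum_(a <= i < b) k i.
Proof.
move=> H hi0 k2.
rewrite (@big_cat_nat _ _ _ i0) /=; try (move: hi0; clear; lia).
rewrite (@big_ltn _ _ _ i0 b); last by lia.
have h1 := @sum_ge_len k a i0 (fun i hi => H i ltac:(lia)).
have h2 := @sum_ge_len k i0.+1 b (fun i hi => H i ltac:(lia)).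
lia.
Qed.

Lemma sum_lb (k : nat -> nat) P q : 0 < P ->
  (forall i, i < P * q -> 0 < k i) ->
  (forall a, a + P <= P * q -> exists i, a <= i < a + P /\ 1 < k i) ->
  P * q + q <= \sum_(0 <= i < P * q) k i.
Proof.
move=> P0; elim: q => [|q IH] Hk Hw; first by rewrite muln0.
have e : P * q.+1 = P * q + P by rewrite mulnS addnC.
have IH' := IH (fun i hi => Hk i ltac:(lia)) (fun a ha => Hw a ltac:(lia)).
have [i0 [hi0 k2]] := Hw (P * q) ltac:(lia).
rewrite e (@big_cat_nat _ _ _ (P * q)) /=; [|lia|lia].
have := @sum_block k (P * q) (P * q + P) i0 (fun i hi => Hk i ltac:(lia)) hi0 k2.
lia.
Qed.


Fixpoint word {X : Type} (k : nat -> nat) (f : nat -> nat -> set X) (g0 : set X)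
   (fuel i j : nat) : set X :=
  match fuel with
  | 0 => g0
  | fuel'.+1 => if (j < k i)%N then f i j else word k f g0 fuel' i.+1 (j - k i)
  end.

Lemma word_in {X : Type} (s : seq (set X)) k f g0 :
  g0 \in s -> (forall i j, f i j \in s) -> forall fuel i j, word k f g0 fuel i j \in s.
Proof.
move=> g0s fs; elim=> [|fuel IH] i j //=; by case: ifP.
Qed.

Lemma word_chain {X : Type} (T : X -> X) k f g0 (u : nat -> X) n :
  (forall i, (i <= n)%N -> (0 < k i)%N) ->
  (forall i, (i <= n)%N -> forall j, (j < k i)%N -> f i j (iter j T (u i))) ->
  (forall i, (i <= n)%N -> u i.+1 = iter (k i) T (u i)) ->
  forall fuel i j, (j < fuel)%N -> (j < \sum_(i <= l < n.+1) k l)%N ->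
  word k f g0 fuel i j (iter j T (u i)).
Proof.
move=> kpos hf hu; elim=> [|fuel IH] i j //= jf js.
have iN : (i <= n)%N.
  rewrite leqNgt; apply/negP => ni.
  by move: js; rewrite big_geq.
case: ifP => jk; first exact: hf.
move: js; rewrite big_ltn // => js.
have kp := kpos i iN.
have -> : iter j T (u i) = iter (j - k i) T (u i.+1).
  by rewrite hu // -iterD subnK // leqNgt jk.
apply: IH; lia.
Qed.


Local Open Scope ring_scope.

Section An.
Variable R : realType.

Lemma esup_le (u : nat -> R) (x : R) :
  (forall e, 0 < e -> exists N, forall n, (N <= n)%N -> u n <= x + e) ->
  (limn_esup (fun n => (u n)%:E) <= x%:E)%E.
Proof.
move=> H; apply/lee_addgt0Pr => e e0; have [N hN] := H e e0.
rewrite /limn_esup /limf_esup.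
apply: (@le_trans _ _ (ereal_sup ((fun n => (u n)%:E) @` [set n | (N <= n)%N]))).
  apply: ereal_inf_lbound; exists [set n | (N <= n)%N] => //; by exists N.
apply: ge_ereal_sup => _ [n Nn <-]; rewrite -EFinD lee_fin; exact: hN.
Qed.

Lemma esup_ev (u : nat -> R) (x : R) :
  (limn_esup (fun n => (u n)%:E) <= x%:E)%E ->
  forall e, 0 < e -> exists N, forall n, (N <= n)%N -> u n <= x + e.
Proof.
move=> H e e0.
have : (limn_esup (fun n => (u n)%:E) < (x + e)%:E)%E.
  by apply: le_lt_trans H _; rewrite lte_fin ltrDl.
rewrite /limn_esup /limf_esup => /ereal_inf_lt [_ [V [N _ HN] <-]] hV.
exists N => n Nn; rewrite -lee_fin; apply: ltW; apply: le_lt_trans hV.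
by apply: ereal_sup_ubound; exists n => //; apply: HN.
Qed.

End An.

Section An2.
Variable R : realType.

Lemma arith_core (A L Bv H d e p mm nn pu : R) :
  A <= L + Bv -> Bv <= (H + d) * nn ->
  (p + 1) * nn <= p * (mm + pu) + p * (p + 1) ->
  (p + 1) * L + (p * pu + p * (p + 1)) * (H + d) < (p + 1) * d * (mm + 1) ->
  e = 2 * d -> 0 < d -> 0 <= H -> 1 <= p -> 0 <= L -> 0 <= mm -> 0 <= pu ->
  (p + 1) * A <= (mm + 1) * (p * H + (p + 1) * e).
Proof.
move=> f1 f2 f3 f4 f5 d0 H0 p1 L0 m0 pu0.
have g1 : (p + 1) * A <= (p + 1) * L + (p + 1) * Bv.
  by rewrite -mulrDr ler_wpM2l //; lra.
have g2 : (p + 1) * Bv <= (H + d) * ((p + 1) * nn).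
  by rewrite mulrCA ler_wpM2l //; lra.
have g3 : (H + d) * ((p + 1) * nn) <= (H + d) * (p * (mm + pu) + p * (p + 1)).
  by rewrite ler_wpM2l //; lra.
have s1 : 0 <= p * H by apply: mulr_ge0; lra.
have s2 : 0 <= d * mm by apply: mulr_ge0; lra.
have s3 : 0 <= p * d by apply: mulr_ge0; lra.
nra.
Qed.


End An2.

Section An3.
Variable R : realType.
Lemma limsup_trans (A Bv : nat -> R) (H L : R) (P PU : nat) :
  (0 < P)%N -> 0 <= H -> 0 <= L -> (forall n, 0 <= Bv n) ->
  (limn_esup (fun n => (Bv n / n.+1%:R)%:E) <= H%:E)%E ->
  (forall m, A m <= L + Bv (P * ((m + PU) %/ P.+1).+1).-1) ->
  (limn_esup (fun m => (A m / m.+1%:R)%:E) <= (P%:R / P.+1%:R * H)%:E)%E.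
Proof.
move=> P0 H0 L0 B0 hB hA; apply: esup_le => e e0.
pose d := e / 2.
have d0 : 0 < d by rewrite /d divr_gt0.
have [N hN] := esup_ev hB d0.
pose K1 := (P%:R + 1) * L + (P%:R * PU%:R + P%:R * (P%:R + 1)) * (H + d).
pose M := maxn (N * P.+1) (Num.truncn (K1 / ((P%:R + 1) * d))).
exists M => m Mm.
pose q := ((m + PU) %/ P.+1).+1.
pose n := (P * q).-1.
have hn : n.+1 = (P * q)%N by rewrite /n prednK // muln_gt0 P0.
have Nq : (N <= (m + PU) %/ P.+1)%N.
  rewrite leq_divRL //; apply: leq_trans (leq_addr _ _).
  by apply: leq_trans (leq_maxl _ _) Mm.
have Nn : (N <= n)%N.
  have : (q <= P * q)%N by rewrite leq_pmull.
  rewrite -hn /q; lia.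
have bn := hN n Nn.
have f2 : Bv n <= (H + d) * n.+1%:R by rewrite -ler_pdivrMr.
have f3n : (P.+1 * (P * q) <= P * (m + PU) + P * P.+1)%N.
  rewrite mulnCA -mulnDr leq_mul2l; apply/orP; right.
  have t := leq_trunc_div (m + PU) P.+1.
  rewrite /q; move: t; set x := ((m + PU) %/ P.+1)%N => t.
  rewrite mulnS mulnC; lia.
have f3 : (P%:R + 1) * n.+1%:R <= P%:R * (m%:R + PU%:R) + P%:R * (P%:R + 1) :> R.
  have h : (P.+1%:R * n.+1%:R <= P%:R * (m + PU)%:R + P%:R * P.+1%:R :> R).
    by rewrite -!natrM -natrD ler_nat hn.
  by rewrite -(natr1 P) natrD in h.
have f4 : K1 < (P%:R + 1) * d * (m%:R + 1).
  have : K1 / ((P%:R + 1) * d) < m%:R + 1.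
    apply: lt_le_trans (Num.Theory.truncnS_gt _) _.
    rewrite -addn1 natrD lerD2r ler_nat.
    by apply: leq_trans (leq_maxr _ _) Mm.
  have pd : 0 < (P%:R + 1) * d by apply: mulr_gt0 => //; rewrite ltr_wpDl.
  by rewrite ltr_pdivrMr // mulrC.
have Pp : 1 <= P%:R :> R by rewrite ler1n.
have e2 : e = 2 * d by rewrite /d; field.
have h := arith_core (hA m) f2 f3 f4 e2 d0 H0 Pp L0 (ler0n _ _) (ler0n _ _).
rewrite ler_pdivrMr //.
have -> : (m.+1%:R : R) = m%:R + 1 by rewrite natr1.
have -> : (P.+1%:R : R) = P%:R + 1 by rewrite natr1.
have Pp1 : 0 < P%:R + 1 :> R by rewrite ltr_wpDl.
rewrite -(ler_pM2l Pp1); apply: le_trans h _; rewrite le_eqVlt; apply/orP; left; apply/eqP.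
field; by rewrite gt_eqF.
Qed.

End An3.

Lemma fr_le {X : Type} (T : X -> X) U x n j :
  first_return T U x n -> (0 < j)%N -> U (iter j T x) -> (n <= j)%N.
Proof.
move=> [n0 [Un H]] j0 Uj; rewrite leqNgt; apply/negP => jn.
by apply: (H j) => //; rewrite j0 jn.
Qed.

Lemma fr_uniq {X : Type} (T : X -> X) U x n n' :
  first_return T U x n -> first_return T U x n' -> n = n'.
Proof.
move=> h h'; apply/eqP; rewrite eqn_leq.
case: (h) => [n0 [Un _]]; case: (h') => [n0' [Un' _]].
by rewrite (fr_le h n0' Un') (fr_le h' n0 Un).
Qed.

Lemma join_open {X : topologicalType} (T : X -> X) (s : seq (set X)) m :
  continuous T -> (forall A, A \in s -> open A) ->
  forall B, B \in cover_iter_join T s m -> open B.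
Proof.
move=> cT so; elim: m => [|m IH] B //=; first exact: so.
move=> /allpairsP [[A C] /= [As /mapP [D Dj ->] ->]].
by apply: openI; [exact: so | apply: open_pre => //; exact: IH].
Qed.

Lemma join_covers {X : Type} (T : X -> X) (s : seq (set X)) m :
  covers s -> covers (cover_iter_join T s m).
Proof.
move=> cs; elim: m => [|m IH] //=; apply/coversP => x.
have [A As Ax] := (coversP _).1 cs x.
have [C Cm Cx] := (coversP _).1 IH (T x).
exists (A `&` T @^-1` C) => //.
apply/allpairsP; exists (A, T @^-1` C); split => //=.
exact: map_f.
Qed.

Section Core.
Variables (R : realType) (X : pseudoMetricType R) (T Ti : X -> X).
Hypotheses (cT : continuous T) (cTi : continuous Ti) (TK : cancel T Ti)
  (TiK : cancel Ti T)
  (dense : forall x, closure (orbit_of T Ti x) = [set: X])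
  (compX : compact [set: X]).
Variables (U : set X) (psi : X -> X).
Hypotheses (oU : open U) (clU : closed U) (U0 : U !=set0) (UX : exists z, ~ U z)
  (cpsi : continuous psi) (psiU : forall y, U (psi y))
  (psi_surj : forall x, U x -> exists y, psi y = x)
  (hret : forall y, exists n, first_return T U (psi y) n /\ iter n T (psi y) = psi (T y)).

Lemma ret y k : first_return T U (psi y) k -> iter k T (psi y) = psi (T y).
Proof.
move=> fk; have [n [fn <-]] := hret y.
by rewrite (fr_uniq fk fn).
Qed.

Definition PU := projT1 (cid (window cT cTi TK dense compX oU U0)).

Lemma PU_prop : (0 < PU)%N /\ forall y, exists j, (j < PU)%N /\ U (iter j T y).
Proof. by rewrite /PU; case: cid. Qed.

Lemma ret_bound y k : first_return T U (psi y) k -> (k <= PU)%N.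
Proof.
move=> fk; have [_ /(_ (T (psi y))) [j [jP Uj]]] := PU_prop.
apply: leq_trans jP; apply: (fr_le fk) => //.
by rewrite iterSr.
Qed.

Lemma ret_pos y k : first_return T U (psi y) k -> (0 < k)%N.
Proof. by case. Qed.

Lemma shift z : exists k y, (k <= PU)%N /\ z = iter k T (psi y).
Proof.
have [_ /(_ (iter PU Ti z)) [j [jP Uj]]] := PU_prop.
rewrite (iter_cancel TiK) in Uj; last exact: ltnW.
have [y hy] := psi_surj Uj.
exists (PU - j)%N, y; split; first exact: leq_subr.
by rewrite hy (iter_cancel TiK) // subnn.
Qed.

Lemma V_nonempty : exists y, ~ U (T (psi y)).
Proof.
apply: contrapT => nV.
have HU : forall x, U x -> U (T x).
  move=> x /psi_surj [y <-]; apply: contrapT => h; apply: nV; by exists y.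
have HUn : forall n x, U x -> U (iter n T x).
  by elim=> [|n IH] x Ux //=; apply: HU; apply: IH.
have Tsurj : forall x, U x -> exists2 w, U w & T w = x.
  move=> x /psi_surj [y0 <-]; exists (psi (Ti y0)) => //.
  have [k [fk ek]] := hret (Ti y0).
  have k1 : k = 1%N.
    apply/eqP; rewrite eqn_leq (fr_le fk) //=; first by case: fk.
    exact: HU.
  by move: ek; rewrite k1 /= TiK.
have [z nz] := UX.
have fw : forall n, ~ U (iter n T z).
  elim=> [|n IH] //= hn; have [w Uw ew] := Tsurj _ hn.
  by apply: IH; rewrite -((can_inj TK) _ _ ew).
have bw : forall n, ~ U (iter n Ti z).
  move=> n hn; apply: nz; have := HUn n _ hn.
  by rewrite (iter_cancel TiK) // subnn.
have [n [] ] := hit dense z oU U0; [exact: fw | exact: bw].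
Qed.

Definition Vset := [set y | ~ U (T (psi y))].

Lemma Vopen : open Vset.
Proof.
rewrite /Vset; apply: (open_pre (f := psi) (O := T @^-1` (~` U))) => //.
by apply: open_pre => //; apply: closed_openC.
Qed.

Definition PV := projT1 (cid (window cT cTi TK dense compX Vopen V_nonempty)).

Lemma PV_prop : (0 < PV)%N /\ forall y, exists j, (j < PV)%N /\ Vset (iter j T y).
Proof. by rewrite /PV; case: cid. Qed.

Lemma ret_ge2 y k : first_return T U (psi y) k -> ~ U (T (psi y)) -> (1 < k)%N.
Proof.
move=> [k0 [Uk _]] nU; move: k0; rewrite leq_eqVlt => /orP [/eqP k1|//].
by move: Uk; rewrite -k1.
Qed.


Definition Rk k := [set x | first_return T U x k].

Lemma Rk_open k : open (Rk k).
Proof.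
have H : forall k, open [set x | forall m, (0 < m < k)%N -> ~ U (iter m T x)].
  clear k; elim=> [|k IH].
    have -> : [set x | forall m, (0 < m < 0)%N -> ~ U (iter m T x)] = setT.
      by apply/seteqP; split => // x _ m /andP [_]; rewrite ltn0.
    exact: openT.
  have -> : [set x | forall m, (0 < m < k.+1)%N -> ~ U (iter m T x)] =
     [set x | forall m, (0 < m < k)%N -> ~ U (iter m T x)]
     `&` [set x | (0 < k)%N -> ~ U (iter k T x)]; last first.
    apply: openI => //; case: k {IH} => [|k].
      have -> : [set x : X | (0 < 0)%N -> ~ U (iter 0 T x)] = setT.
        by apply/seteqP; split.
      exact: openT.
    have -> : [set x : X | (0 < k.+1)%N -> ~ U (iter k.+1 T x)] = iter k.+1 T @^-1` (~` U).
      by apply/seteqP; split => x /=; [apply|].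
    by apply: open_pre; [exact: iter_cont | exact: closed_openC].
  apply/seteqP; split=> x /=.
    move=> h; split; first by move=> m /andP [m0 mk]; apply: h; rewrite m0 ltnS ltnW.
    move=> k0; have hk : (0 < k < k.+1)%N by rewrite k0 ltnSn.
    exact: h hk.
  move=> [h1 h2] m /andP [m0]; rewrite ltnS leq_eqVlt => /orP [/eqP mk|mk].
    by move: h2; rewrite -mk; apply.
  by apply: h1; rewrite m0 mk.
case: k => [|k].
  by rewrite (_ : Rk 0 = set0); [exact: open0 | apply/seteqP; split => x // []].
rewrite (_ : Rk k.+1 = iter k.+1 T @^-1` U `&`
   [set x | forall m, (0 < m < k.+1)%N -> ~ U (iter m T x)]).
  by apply: openI => //; apply: open_pre => //; exact: iter_cont.
apply/seteqP; split=> x /=; first by move=> [_ [h1 h2]].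
by move=> [h1 h2].
Qed.

Definition eps (g : seq (set X)) : seq (set X) :=
  flatten [seq [seq psi @^-1` (Rk k `&` D) | D <- cover_iter_join T g k.-1]
          | k <- iota 1 PU].

Lemma eps_open g : (forall A, A \in g -> open A) -> forall e, e \in eps g -> open e.
Proof.
move=> go e /flatten_mapP [k _ /mapP [D Dj ->]].
apply: open_pre => //; apply: openI; first exact: Rk_open.
exact: join_open Dj.
Qed.

Lemma eps_covers g : covers g -> covers (eps g).
Proof.
move=> cg; apply/coversP => y.
have [k [fk _]] := hret y.
have [D Dj Dx] := (coversP _).1 (join_covers T k.-1 cg) (psi y).
exists (psi @^-1` (Rk k `&` D)) => //.
apply/flatten_mapP; exists k.
  by rewrite mem_iota (ret_pos fk) /= add1n ltnS (ret_bound fk).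
exact: map_f.
Qed.


Lemma chain_facts (e : nat -> set X) (p : nat -> nat * (nat -> set X)) n y :
  (forall i, (i <= n)%N -> forall x, e i x -> first_return T U (psi x) (p i).1 /\
      forall j, (j < (p i).1)%N -> (p i).2 j (iter j T (psi x))) ->
  (forall i, (i <= n)%N -> e i (iter i T y)) ->
  [/\ (forall i, (i <= n)%N -> (0 < (p i).1)%N),
      (forall i, (i <= n)%N -> forall j, (j < (p i).1)%N ->
          (p i).2 j (iter j T (psi (iter i T y)))) &
      (forall i, (i <= n)%N -> psi (iter i.+1 T y) = iter (p i).1 T (psi (iter i T y)))].
Proof.
move=> hp Ay; split.
- by move=> i iN; have [fk _] := hp i iN _ (Ay i iN); exact: ret_pos fk.
- by move=> i iN; have [_ hf] := hp i iN _ (Ay i iN).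
- move=> i iN; have [fk _] := hp i iN _ (Ay i iN).
  by rewrite (ret fk) iterS.
Qed.

Lemma key g m n q t :
  covers g -> (n.+1 = PV * q)%N -> (m + PU < PV * q + q)%N ->
  {subset t <= cover_iter_join T (eps g) n} -> covers t ->
  @cover_number R X (cover_iter_join T g m) <= (PU.+1 * size t)%:R.
Proof.
move=> cg Hn Hq tsub ct.
have [x0 _] := U0.
have [g0 g0in _] := (coversP _).1 cg x0.
rewrite -[X in (X * _)%N](size_iota 0 PU.+1) -(size_allpairs
   (fun k (A : set X) => [set iter k T (psi y) | y in A])).
apply: cover_number_le.
  apply/coversP => z; have [k [y [kP ->]]] := shift z.
  have [A At Ay] := (coversP _).1 ct y.
  exists [set iter k T (psi y) | y in A]; last by exists y.
  by apply/allpairsP; exists (k, A); split => //; rewrite mem_iota add0n ltnS kP.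
move=> _ /allpairsP [[k A] [kin At ->]].
have kP : (k <= PU)%N by move: kin; rewrite mem_iota add0n ltnS.
have [[y0 Ay0]|A0] := pselect (A !=set0); last first.
  have [B Bm _] := (coversP _).1 (join_covers T m cg) x0.
  exists B => // _ [y Ay <-]; exfalso; apply: A0; by exists y.
have [e [ein eA]] := (joinP _ _ _ _).1 (tsub A At).
have [p hp] : {p : nat -> nat * (nat -> set X) & forall i,
   (forall j, (p i).2 j \in g) /\
   ((i <= n)%N -> forall x, e i x -> first_return T U (psi x) (p i).1 /\
      forall j, (j < (p i).1)%N -> (p i).2 j (iter j T (psi x)))}.
  apply: (@choice _ _ (fun i pi => (forall j, pi.2 j \in g) /\
   ((i <= n)%N -> forall x, e i x -> first_return T U (psi x) pi.1 /\
      forall j, (j < pi.1)%N -> pi.2 j (iter j T (psi x))))) => i.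
  case: (leqP i n) => [iN|Ni]; last first.
    by exists (0%N, fun _ => g0); split => //; rewrite leqNgt Ni.
  have /flatten_mapP [k' _ /mapP [D Dj eD]] := ein i iN.
  have [f' [f's eqD]] := (joinP _ _ _ _).1 Dj.
  exists (k', fun j => if (j < k')%N then f' j else g0); split.
    move=> j /=; case: ifP => // jk; apply: f's.
    by rewrite -ltnS; apply: leq_trans jk (leqSpred _).
  move=> _ x; rewrite eD eqD /= => -[fk hD]; split => // j jk /=; rewrite jk.
  apply: hD; case: fk => k0 _; by rewrite -ltnS prednK.
have hp2 := fun i => (hp i).2.
rewrite eA in Ay0.
have [kpos0 _ _] := chain_facts hp2 Ay0.
have [PV0 PVw] := PV_prop.
have Sb : (m + PU < \sum_(0 <= l < n.+1) (p l).1)%N.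
  have := @sum_lb (fun l => (p l).1) PV q PV0.
  rewrite -Hn in Hq * => h; apply: leq_trans Hq _; apply: h.
    by move=> i iN; apply: kpos0.
  move=> a ha; have [j [jP Vj]] := PVw (iter a T y0).
  exists (j + a)%N; split; first by rewrite leq_addl /= addnC ltn_add2l.
  have iN : (j + a <= n)%N by rewrite -ltnS; apply: leq_trans ha; rewrite addnC ltn_add2l.
  have [fk _] := hp2 _ iN _ (Ay0 _ iN).
  by move: Vj; rewrite /Vset /= -iterD => Vj; exact: ret_ge2 fk Vj.
pose F0 := (m + PU).+1.
exists [set x | forall j, (j <= m)%N ->
   word (fun l => (p l).1) (fun l j => (p l).2 j) g0 F0 0 (j + k) (iter j T x)].
  apply/joinP; exists (fun j => word (fun l => (p l).1) (fun l j => (p l).2 j) g0 F0 0 (j + k)).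
  split => // j _; apply: word_in => // i j'; exact: (hp i).1.
move=> _ [y Ay <-] j jm.
rewrite eA in Ay.
have [kpos hf hu] := chain_facts hp2 Ay.
have := @word_chain _ T (fun l => (p l).1) (fun l j => (p l).2 j) g0 (fun i => psi (iter i T y)) n kpos hf hu F0 0%N (j + k).
rewrite /= -iterD; apply.
  by rewrite /F0 ltnS leq_add.
by apply: leq_trans Sb; rewrite ltnS leq_add.
Qed.


Lemma Nge1 (s : seq (set X)) : covers s -> 1 <= @cover_number R X s.
Proof. by move=> cs; have [x0 _] := U0; apply: cover_number_ge1 x0 cs. Qed.

Lemma ent_ge0 (s : seq (set X)) : covers s -> (0 <= @cover_entropy R X T s)%E.
Proof.
move=> cs; rewrite /cover_entropy /limn_esup /limf_esup.
apply: le_ereal_inf_tmp => _ [V [N _ HN] <-].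
apply: le_ereal_sup_tmp.
exists ((ln (@cover_number R X (cover_iter_join T s N)) / N.+1%:R)%:E).
  by exists N => //; apply: HN => /=.
rewrite lee_fin; apply: divr_ge0 => //; apply: ln_ge0; apply: Nge1.
exact: join_covers.
Qed.

Lemma open_cover_covers (s : seq (set X)) : open_cover s -> covers s.
Proof. by case. Qed.

Lemma ent_le (H : R) : top_entropy T = H%:E -> forall s, open_cover s ->
  (@cover_entropy R X T s <= (PV%:R / PV.+1%:R * H)%:E)%E.
Proof.
move=> hH s os.
have cs := open_cover_covers os.
have H0 : 0 <= H.
  rewrite -lee_fin -hH; apply: le_trans (ent_ge0 cs) _.
  by apply: ereal_sup_ubound; exists s.
have [PV0 _] := PV_prop.
have ce := eps_covers cs.
have oe : open_cover (eps s) by split => //; apply: eps_open; case: os.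
apply: (@limsup_trans R (fun m => ln (@cover_number R X (cover_iter_join T s m)))
   (fun n => ln (@cover_number R X (cover_iter_join T (eps s) n))) H (ln PU.+1%:R) PV PU) => //.
- by apply: ln_ge0; rewrite ler1n.
- by move=> n; apply: ln_ge0; apply: Nge1; apply: join_covers.
- by rewrite -hH; apply: ereal_sup_ubound; exists (eps s).
move=> m.
set q := ((m + PU) %/ PV.+1).+1.
set n := (PV * q).-1.
have hn : n.+1 = (PV * q)%N by rewrite /n prednK // muln_gt0 PV0.
have hq : (m + PU < PV * q + q)%N.
  have -> : (PV * q + q = q * PV.+1)%N by rewrite mulnSr mulnC.
  by rewrite /q ltn_ceil.
have N1 := Nge1 (join_covers T m cs).
have N2 := Nge1 (join_covers T n ce).
have le1 : @cover_number R X (cover_iter_join T s m) / PU.+1%:R <=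
           @cover_number R X (cover_iter_join T (eps s) n).
  apply: cover_number_ge; first exact: join_covers.
  move=> t tsub ct; rewrite ler_pdivrMr ?ltr0n //.
  by rewrite mulrC -natrM; apply: key hn hq tsub ct.
have pos1 : 0 < @cover_number R X (cover_iter_join T s m) by apply: lt_le_trans N1.
have pos2 : 0 < @cover_number R X (cover_iter_join T (eps s) n) by apply: lt_le_trans N2.
have pos3 : 0 < PU.+1%:R * @cover_number R X (cover_iter_join T (eps s) n).
  by apply: mulr_gt0; rewrite ?ltr0n.
rewrite -lnM ?posrE ?ltr0n ?pos2 //.
rewrite ler_ln ?posrE ?pos1 ?pos3 //.
by rewrite -ler_pdivrMl ?ltr0n // mulrC.
Qed.

Lemma ent_final : @top_entropy R X T = 0%E \/ @top_entropy R X T = +oo%E.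
Proof.
have os1 : open_cover [:: [set: X]].
  split; first by move=> A; rewrite mem_seq1 => /eqP ->; exact: openT.
  by apply/coversP => x; exists [set: X]; rewrite ?mem_seq1.
have h0 : (0 <= @top_entropy R X T)%E.
  apply: le_trans (ent_ge0 (open_cover_covers os1)) _.
  by apply: ereal_sup_ubound; exists [:: [set: X]].
case eh : (@top_entropy R X T) => [H| |]; last by rewrite eh in h0.
  2: by right.
left; congr (_%:E).
have H0 : 0 <= H by rewrite -lee_fin -eh.
have hb : (@top_entropy R X T <= (PV%:R / PV.+1%:R * H)%:E)%E.
  by apply: ge_ereal_sup => _ [s os <-]; apply: ent_le.
rewrite eh lee_fin in hb.
have [PV0 _] := PV_prop.
have P1 : 0 < PV.+1%:R :> R by rewrite ltr0n.
have : PV.+1%:R * H <= PV%:R * H.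
  by move: hb; rewrite mulrAC ler_pdivlMr // mulrC.
rewrite -natr1 mulrDl mul1r => h.
apply/eqP; rewrite eq_le H0 andbT; lra.
Qed.

End Core.

Local Open Scope ereal_scope.

Theorem mainTheorem7 (R : realType) (X : pseudoMetricType R) (T : X -> X) :
  cantor_set X -> minimal_system T -> self_induced T ->
  @top_entropy R X T = 0 \/ @top_entropy R X T = +oo.
Proof.
move=> [[_ compX _ _] _] [cT [Ti [cTi TK TiK dense]]].
move=> [U [[oU clU] U0 UXne [phi [psi [_ [cpsi [psiU [psiphi [phipsi hc]]]]]]]]].
have UX : exists z, ~ U z.
  apply: contrapT => nz; move/eqP: UXne; apply; apply/seteqP; split => // x _.
  by apply: contrapT => nx; apply: nz; exists x.
have psi_surj : forall x, U x -> exists y, psi y = x.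
  by move=> x Ux; exists (phi x); apply: psiphi.
have hret : forall y, exists n, first_return T U (psi y) n /\ iter n T (psi y) = psi (T y).
  move=> y; have [n [fr e]] := hc (psi y) (psiU y).
  exists n; split => //; rewrite phipsi in e; rewrite -e psiphi //.
  by case: fr => _ [].
exact: (ent_final cT cTi TK TiK dense compX oU clU U0 UX cpsi psiU psi_surj hret).
Qed.
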